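(* If $\mathcal A$ and $\mathcal B$ are two distinct $\sigma$-subfields, then $\|\mathbb P_{\mathcal A}-\mathbb P_{\mathcal B}\|_{L^1\to L^1}\ge1$ and $\|\mathbb P_{\mathcal A}-\mathbb P_{\mathcal B}\|_{L^\infty\to L^\infty}\ge1/2$. Consequently, if $(\mathcal B_n)_{n\in\mathbb N_0}$ are $\sigma$-subfields with $\|\mathbb P_{\mathcal B_n}-\mathbb P_{\mathcal B_0}\|_{L^p\to L^p}\to0$ for $p=1$ or $p=\infty$, then $\mathcal B_n=\mathcal B_0$ for all sufficiently large $n$.
   Context: Let $(\Omega,\mathcal F,\mathbb P)$ be a (not necessarily complete) probability space and $\mathcal N:=\{F\in\mathcal F:\mathbb P(F)=0\}$. A $\sigma$-subfield is a sub-$\sigma$-field $\mathcal A\subset\mathcal F$ with $\mathcal A=\sigma(\mathcal A\cup\mathcal N)$. For a $\sigma$-subfield $\mathcal A$, $\mathbb P_{\mathcal A}f:=\mathbb E^{\mathbb P}[f\mid\mathcal A]$, viewed as a bounded linear operator on the real normed space $L^p(\mathbb P)$; $\|\cdot\|_{L^p\to L^p}$ is the operator norm. *)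

(* Defs.v *)
From HB Require Import structures.
From mathcomp Require Import all_boot all_order all_algebra.
From mathcomp Require Import all_classical all_reals all_analysis.
Set Implicit Arguments. Unset Strict Implicit. Unset Printing Implicit Defensive.
Import Order.TTheory GRing.Theory Num.Theory.
Import numFieldNormedType.Exports.
Local Open Scope classical_set_scope.
Local Open Scope ring_scope.
Local Open Scope ereal_scope.

Section Defs.
Context {d : measure_display} {T : measurableType d} {R : realType}.
Variable P : probability T R.

Definition null_sets : set (set T) := [set F | measurable F /\ P F = 0].

Definition sigma_subfield (A : set (set T)) : Prop :=
  [/\ A `<=` measurable, sigma_algebra setT A & A = <<s A `|` null_sets >>].

Definition measurable_wrt (A : set (set T)) (g : T -> R) : Prop :=
  forall U : set R, measurable U -> A (g @^-1` U).

Definition is_cond_exp (A : set (set T)) (f g : T -> R) : Prop :=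
  [/\ measurable_wrt A g, P.-integrable setT (EFin \o g) &
      forall E, A E -> \int[P]_(x in E) (g x)%:E = \int[P]_(x in E) (f x)%:E].

Definition in_Lp (p : \bar R) (f : T -> R) : Prop :=
  measurable_fun setT f /\ Lnorm P p (EFin \o f) < +oo.

(* operator norm of P_A - P_B on L^p(P):
   sup { ||P_A f - P_B f||_p : f in L^p, ||f||_p <= 1 }.
   (The value ||gA - gB||_p does not depend on the chosen versions.) *)
Definition condexp_diff_opnorm (p : \bar R) (A B : set (set T)) : \bar R :=
  ereal_sup [set v | exists f gA gB,
     [/\ in_Lp p f, Lnorm P p (EFin \o f) <= 1,
          is_cond_exp A f gA, is_cond_exp B f gB &
          v = Lnorm P p (fun x => (gA x - gB x)%:E)] ].
End Defs.

(* Main.v *)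
Require Import Defs.
From HB Require Import structures.
From mathcomp Require Import all_boot all_order all_algebra.
From mathcomp Require Import all_classical all_reals all_analysis.
From mathcomp Require Import measurable_realfun ess_sup_inf.
Set Implicit Arguments. Unset Strict Implicit. Unset Printing Implicit Defensive.
Import Order.TTheory GRing.Theory Num.Theory.
Import numFieldNormedType.Exports.
Local Open Scope classical_set_scope.
Local Open Scope ring_scope.
Local Open Scope ereal_scope.
From mathcomp Require Import lra.

Section subsigma.
Context d (T : measurableType d) (R : realType) (B : set (set T)).
Hypotheses (sB : sigma_algebra setT B) (subB : B `<=` measurable).
Local Notation T' := (g_sigma_algebraType B).

Lemma measT'E : (measurable : set (set T')) = B.
Proof. exact: measurable_g_measurableTypeE. Qed.

Lemma measT'B (A : set T') : measurable A -> B A.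
Proof. by move=> mA; have := mA; rewrite /measurable /= sigma_algebra_id. Qed.

Lemma mid : measurable_fun setT (idfun : T -> T').
Proof.
move=> _ Y mY; rewrite setTI; apply: subB.
by rewrite -measT'E.
Qed.

Lemma mT'T d2 (Y : measurableType d2) (f : T -> Y) :
  measurable_fun (setT : set T') (f : T' -> Y) -> measurable_fun setT f.
Proof. move=> mf; exact: (measurableT_comp mf mid). Qed.

Lemma BT : B setT.
Proof. by case: sB => B0 BC _; rewrite -setC0 -setTD; exact: BC. Qed.

Lemma BT' (E : set T) : B E -> measurable (E : set T').
Proof. exact: sub_sigma_algebra. Qed.

Definition idB : {mfun T >-> T'} := HB.pack (idfun : T -> T') (isMeasurableFun.Build _ _ _ _ _ mid).

Variable m : {finite_measure set T -> \bar R}.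
Definition pf := pushforward m idB.

Let pf0 : pf set0 = 0. Proof. exact: measure0. Qed.
Let pf_ge0 A : 0 <= pf A. Proof. exact: measure_ge0. Qed.
Let pf_sa : semi_sigma_additive pf. Proof. exact: measure_semi_sigma_additive. Qed.
HB.instance Definition _ := isMeasure.Build _ _ _ pf pf0 pf_ge0 pf_sa.
Let pf_fin : fin_num_fun pf.
Proof. move=> A mA. rewrite /pf /pushforward. apply: fin_num_measure; apply: subB; exact: measT'B. Qed.
HB.instance Definition _ := Measure_isFinite.Build _ _ _ pf pf_fin.

End subsigma.

Lemma ge0_integral_mrestr d (T : measurableType d) (R : realType)
  (m : {measure set T -> \bar R}) (M : set T) (mM : measurable M) (f : T -> \bar R) :
  measurable_fun setT f -> (forall x, 0 <= f x) ->
  \int[mrestr m mM]_x f x = \int[m]_(x in M) f x.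
Proof.
move=> mf f0.
rewrite -(setUv M) ge0_integral_setU//; last 3 first.
- exact: measurableC.
- by rewrite setUv.
- by apply/disj_setPS => x [].
have -> : \int[mrestr m mM]_(x in ~` M) f x = 0.
  apply: null_set_integral.
  - exact: measurableC.
  - exact: measurable_funTS.
  - by transitivity (m (~` M `&` M)); [|rewrite setICl measure0].
rewrite adde0.
apply: eq_measure_integral => A mA AM.
by rewrite /mrestr; congr (m _); apply/seteqP; split => x //=; [case| move=> Ax; split=> //; exact: AM].
Qed.


Section rn.
Context d (T : measurableType d) (R : realType) (P : probability T R) (B : set (set T)).
Hypotheses (sB : sigma_algebra setT B) (subB : B `<=` measurable).
Local Notation T' := (g_sigma_algebraType B).
Local Notation PB := (pf sB subB P).
Variables (M : set T) (mM : measurable M).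
Local Notation nuM := (pf sB subB (mrestr P mM)).

Lemma nuM_ac : nuM `<< PB.
Proof.
move=> N PN A mA AN.
have := PN A mA AN.
rewrite /pf /pushforward /= => PA0.
apply/eqP; rewrite eq_le measure_ge0 andbT -PA0.
apply: le_measure; rewrite ?inE//.
all: try (apply: measurableI => //); try (apply: subB; exact: measT'B).
Qed.

Definition RNM := @Radon_Nikodym_SigmaFinite.f _ T' R nuM PB.
Definition hM (x : T) : R := fine (RNM x).

Lemma RNM_ge0 x : 0 <= RNM x.
Proof. exact: (Radon_Nikodym_SigmaFinite.f_ge0 nuM_ac). Qed.

Lemma RNME x : RNM x = (hM x)%:E.
Proof. by rewrite /hM fineK //; exact: (Radon_Nikodym_SigmaFinite.f_fin_num nuM_ac). Qed.

Lemma hM_ge0 x : (0 <= hM x)%R.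
Proof. by rewrite -lee_fin -RNME RNM_ge0. Qed.

Lemma measurable_RNM : measurable_fun (setT : set T') RNM.
Proof. exact: measurable_int (Radon_Nikodym_SigmaFinite.f_integrable nuM_ac). Qed.

Lemma measurable_hM' : measurable_fun (setT : set T') (hM : T' -> R).
Proof. by apply: measurableT_comp => //; exact: measurable_RNM. Qed.

Lemma hM_wrt (U : set R) : measurable U -> B (hM @^-1` U).
Proof.
move=> mU; apply: (measT'B sB).
by have := measurable_hM' measurableT mU; rewrite setTI.
Qed.

Lemma measurable_hM : measurable_fun (setT : set T) hM.
Proof.
have -> : hM = (hM : T' -> R) \o (idB sB subB) by [].
apply: measurableT_comp => //; exact: measurable_hM'.
Qed.

Lemma int_hM E : B E -> \int[P]_(x in E) (hM x)%:E = P (M `&` E).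
Proof.
move=> BE; have mE := BT' BE.
have := Radon_Nikodym_SigmaFinite.f_integral nuM_ac mE.
rewrite (ge0_integral_pushforward (mid sB subB) P mE); last 2 first.
- exact: measurable_funTS measurable_RNM.
- by move=> x _; exact: RNM_ge0.
move=> h; transitivity (\int[P]_(x in E) RNM x).
  by apply: eq_integral => x _; rewrite RNME.
rewrite -[LHS]/(\int[P]_(x in idB sB subB @^-1` E) (RNM \o idB sB subB) x) -h.
by rewrite /pushforward /mrestr setIC.
Qed.

Lemma pullout (psi : T -> \bar R) : measurable_fun (setT : set T') psi ->
  (forall x, 0 <= psi x) ->
  \int[P]_x (psi x * (hM x)%:E) = \int[P]_(x in M) psi x.
Proof.
move=> mpsi psi0.
have := Radon_Nikodym_SigmaFinite.change_of_variables nuM_ac (f:=psi) (E:=setT) psi0 measurableT mpsi.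
rewrite (ge0_integral_pushforward (mid sB subB) P measurableT); last 2 first.
- by apply: emeasurable_funM => //; exact: measurable_RNM.
- by move=> x _; rewrite mule_ge0 ?RNM_ge0.
rewrite (ge0_integral_pushforward (mid sB subB) (mrestr P mM) measurableT) //.
rewrite preimage_setT ge0_integral_mrestr //; last exact: (mT'T sB subB).
move=> <-; apply: eq_integral => x _; by rewrite -RNME.
Qed.

Lemma hM_int : P.-integrable setT (EFin \o hM).
Proof.
apply/integrableP; split; first exact/measurable_EFinP/measurable_hM.
rewrite (eq_integral (fun x => (hM x)%:E)); last first.
  by move=> x _ /=; rewrite ger0_norm ?hM_ge0.
rewrite int_hM; last exact: BT.
by rewrite ltey_eq fin_num_measure //; apply: measurableI.
Qed.
End rn.

Lemma L1_ineq d (T : measurableType d) (R : realType) (P : probability T R)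
  (u : T -> R) (S : set T) : measurable S ->
  P.-integrable setT (EFin \o u) -> \int[P]_x (u x)%:E = 0 ->
  2%:E * `|\int[P]_(x in S) (u x)%:E| <= \int[P]_x `|(u x)%:E|.
Proof.
move=> mS iu u0.
have mu : measurable_fun setT (EFin \o u) := measurable_int _ iu.
have mCS : measurable (~` S) by exact: measurableC.
have dS : [disjoint S & ~` S] by apply/disj_setPS => x [].
have fa : \int[P]_(x in S) (u x)%:E \is a fin_num.
  apply: integrable_fin_num => //; exact: (integrableS measurableT _ (@subsetT _ _) iu).
have fb : \int[P]_(x in ~` S) (u x)%:E \is a fin_num.
  apply: integrable_fin_num => //; exact: (integrableS measurableT _ (@subsetT _ _) iu).
have : \int[P]_(x in S `|` ~` S) (u x)%:E = 0 by rewrite setUv.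
rewrite integral_setU //; last by rewrite setUv.
have -> : \int[P]_x `|(u x)%:E| = \int[P]_(x in S `|` ~` S) `|(u x)%:E| by rewrite setUv.
rewrite ge0_integral_setU //; last first.
  by rewrite setUv; apply: measurableT_comp.
move: fa fb.
set a := \int[P]_(x in S) _; set b := \int[P]_(x in ~` S) _ => fa fb ab0.
have ha : `|a| <= \int[P]_(x in S) `|(u x)%:E|.
  by apply: le_abse_integral => //; exact: measurable_funTS.
have hb : `|b| <= \int[P]_(x in ~` S) `|(u x)%:E|.
  by apply: le_abse_integral => //; exact: measurable_funTS.
move: ab0 ha hb; rewrite -(fineK fa) -(fineK fb) -EFinD => /eqP; rewrite eqe => /eqP ab0.
have -> : fine b = (- fine a)%R by apply/eqP; rewrite -subr_eq0 opprK addrC ab0.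
rewrite !abse_EFin normrN => ha hb.
apply: le_trans (leeD ha hb).
by rewrite -EFinD -EFinM lee_fin mulr2n mulrDl mul1r.
Qed.


Section main.
Context d (T : measurableType d) (R : realType) (P : probability T R).

Lemma ss_sa A : sigma_subfield P A -> sigma_algebra setT A. Proof. by case. Qed.
Lemma ss_sub A : sigma_subfield P A -> A `<=` measurable. Proof. by case. Qed.
Lemma ss_null A : sigma_subfield P A -> forall N, measurable N -> P N = 0 -> A N.
Proof.
case=> _ _ e N mN PN; rewrite e; apply: sub_sigma_algebra; right; split => //.
Qed.

Lemma ss_complete A S D : sigma_subfield P A -> measurable S -> A D ->
  P (S `\` D) = 0 -> P (D `\` S) = 0 -> A S.
Proof.
move=> sA mS AD P1 P2.
have mD : measurable D by exact: ss_sub sA _ AD.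
have A1 : A (S `\` D) by apply: ss_null sA _ _ P1; exact: measurableD.
have A2 : A (D `\` S) by apply: ss_null sA _ _ P2; exact: measurableD.
have -> : S = (D `\` (D `\` S)) `|` (S `\` D).
  apply/seteqP; split => x.
    by move=> Sx; case: (pselect (D x)) => Dx; [left; split => // -[]|right].
  by case => [[Dx /not_andP [//|/contrapT //]]|[]].
apply: (measT'B (ss_sa sA)); apply: measurableU; first apply: measurableD.
all: exact: BT'.
Qed.

Definition hh A (sA : sigma_subfield P A) M (mM : measurable M) :=
  hM P (ss_sa sA) (ss_sub sA) mM.

Lemma ce_hM X (sX : sigma_subfield P X) M (mM : measurable M) (k : R) :
  is_cond_exp P X (fun x => k * \1_M x)%R (fun x => k * hh sX mM x)%R.
Proof.
split.
- move=> U mU; apply: (measT'B (ss_sa sX)).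
  have mf : measurable_fun (setT : set (g_sigma_algebraType X))
     (fun x : g_sigma_algebraType X => k * hh sX mM x)%R.
    by apply: measurable_funM => //; exact: measurable_hM'.
  by have := mf measurableT _ mU; rewrite setTI.
- have -> : EFin \o (fun x => k * hh sX mM x)%R = (fun x => k%:E * (EFin \o hh sX mM) x).
    by apply/funext => x; rewrite /= EFinM.
  apply: integrableZl => //; exact: hM_int.
- move=> E XE.
  have mE : measurable E by exact: ss_sub sX _ XE.
  under eq_integral do rewrite EFinM.
  under [RHS]eq_integral do rewrite EFinM.
  rewrite integralZl//; last first.
    by apply: (integrableS measurableT) => //; exact: hM_int.
  rewrite integralZl//; last first.
    by apply: (integrableS measurableT) => //; exact: integrable_indic.
  by rewrite int_hM// integral_indic.
Qed.
End main.

Section L1.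
Context d (T : measurableType d) (R : realType) (P : probability T R).

Lemma L1_step A B (sA : sigma_subfield P A) (sB : sigma_subfield P B) S C
  (mS : measurable S) (AS : A S) (mC : measurable C) :
  (0 < fine (P C))%R ->
  (1 <= 2 * `| (fine (P C))^-1 * (fine (P (C `&` S)) -
      fine (\int[P]_(x in S) (hh sB mC x)%:E)) |)%R ->
  1 <= condexp_diff_opnorm P 1 A B.
Proof.
move=> c0 H.
set c := fine (P C) in c0 H.
have Pc : P C = c%:E by rewrite /c fineK// fin_num_measure.
pose f x := (c^-1 * \1_C x)%R.
pose gA x := (c^-1 * hh sA mC x)%R.
pose gB x := (c^-1 * hh sB mC x)%R.
have ceA := ce_hM sA mC c^-1.
have ceB := ce_hM sB mC c^-1.
have [_ iA eA] := ceA.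
have [_ iB eB] := ceB.
have mf : measurable_fun setT f.
  by apply: measurable_funM => //; exact: measurable_indic.
have intf : \int[P]_x `|(f x)%:E| = 1.
  transitivity (\int[P]_x (c^-1%:E * (\1_C x)%:E)).
    apply: eq_integral => x _; rewrite /f EFinM abseM gee0_abs ?lee_fin ?invr_ge0 ?ltW//.
    by rewrite gee0_abs// lee_fin.
  rewrite integralZl//; last exact: integrable_indic.
  rewrite integral_indic// setIT; transitivity (c^-1%:E * c%:E).
    by congr (_ * _); exact: Pc.
  by rewrite -EFinM mulVf// gt_eqF.
rewrite /condexp_diff_opnorm; apply: ereal_sup_ge; exists (Lnorm P 1 (fun x => (gA x - gB x)%:E)).
  exists f, gA, gB; split => //.
  - by split; [exact: mf| rewrite Lnorm1 intf ltry].
  - by rewrite Lnorm1 intf.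
rewrite Lnorm1.
have iu : P.-integrable setT (EFin \o (fun x => gA x - gB x)%R).
  have -> : EFin \o (fun x => gA x - gB x)%R = (fun x => (EFin \o gA) x - (EFin \o gB) x).
    by apply/funext => x; rewrite /= EFinB.
  exact: integrableB.
have AT := BT (ss_sa sA).
have BT := BT (ss_sa sB).
have u0 : \int[P]_x ((gA x - gB x)%R%:E) = 0.
  under eq_integral do rewrite EFinB.
  rewrite integralB_EFin// (eB _ BT) -(eA _ AT) subee//.
  exact: integrable_fin_num iA.
have := L1_ineq mS iu u0.
apply: le_trans.
have iAS : P.-integrable S (EFin \o gA) by exact: (integrableS measurableT).
have iBS : P.-integrable S (EFin \o gB) by exact: (integrableS measurableT).
under eq_integral do rewrite EFinB.
rewrite integralB_EFin// (eA _ AS).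
under eq_integral do rewrite EFinM.
rewrite integralZl//; last by apply: (integrableS measurableT) => //; exact: hM_int.
have -> : \int[P]_(x in S) (c^-1 * \1_C x)%:E = c^-1%:E * P (C `&` S).
  rewrite -integral_indic// -integralZl//; last first.
    by apply: (integrableS measurableT) => //; exact: integrable_indic.

have fX : \int[P]_(x in S) (hh sB mC x)%:E \is a fin_num.
  by apply: integrable_fin_num => //; apply: (integrableS measurableT) => //; exact: hM_int.
have fp : P (C `&` S) \is a fin_num by rewrite fin_num_measure//; exact: measurableI.
move: H fX fp.
set X := \int[P]_(x in S) _.
set p := P (C `&` S).
move=> H fX fp.
rewrite -(fineK fX) -(fineK fp) -!EFinM lee_fin.
by rewrite -mulrBr.
Qed.

Lemma swap_hh B (sB : sigma_subfield P B) M1 M2 (m1 : measurable M1) (m2 : measurable M2) :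
  \int[P]_(x in M1) (hh sB m2 x)%:E = \int[P]_(x in M2) (hh sB m1 x)%:E.
Proof.
rewrite /hh -(pullout P (ss_sa sB) (ss_sub sB) m1 (psi := fun x => (hM P (ss_sa sB) (ss_sub sB) m2 x)%:E)); last 2 first.
- by apply/measurable_EFinP; exact: measurable_hM'.
- by move=> x; rewrite lee_fin hM_ge0.
rewrite -(pullout P (ss_sa sB) (ss_sub sB) m2 (psi := fun x => (hM P (ss_sa sB) (ss_sub sB) m1 x)%:E)); last 2 first.
- by apply/measurable_EFinP; exact: measurable_hM'.
- by move=> x; rewrite lee_fin hM_ge0.
by apply: eq_integral => x _; rewrite muleC.
Qed.

Lemma lemR1 (c x : R) : (0 < c -> 0 <= x -> x <= c / 2 -> 1 <= 2 * `|c^-1 * (c - x)|)%R.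
Proof.
move=> c0 x0 xc.
have ic : (c^-1 * c = 1)%R by rewrite mulVf// gt_eqF.
have ic0 : (0 < c^-1)%R by rewrite invr_gt0.
apply: le_trans (_ : 2 * (c^-1 * (c - x)) <= _)%R; last first.
  by rewrite ler_pM2l// ler_norm.
nra.
Qed.

Lemma lemR2 (c x : R) : (0 < c -> c / 2 <= x -> 1 <= 2 * `|c^-1 * (0 - x)|)%R.
Proof.
move=> c0 xc.
have ic : (c^-1 * c = 1)%R by rewrite mulVf// gt_eqF.
have ic0 : (0 < c^-1)%R by rewrite invr_gt0.
apply: le_trans (_ : 2 * (- (c^-1 * (0 - x))) <= _)%R; last first.
  by rewrite ler_pM2l// -normrN ler_norm.
nra.
Qed.


Lemma halfE (x : \bar R) : x \is a fin_num -> (2^-1)%:E * x = ((fine x) / 2)%:E.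
Proof. by move=> fx; rewrite -{1}(fineK fx) -EFinM mulrC. Qed.

Lemma L1_bound A B (sA : sigma_subfield P A) (sB : sigma_subfield P B) S :
  A S -> ~ B S -> 1 <= condexp_diff_opnorm P 1 A B.
Proof.
move=> AS nBS.
have mS : measurable S := ss_sub sA AS.
set h := hh sB mS.
pose D := h @^-1` [set` `]2^-1%R, +oo[%R].
have BD : B D by apply: hM_wrt; exact: measurable_itv.
have mD : measurable D := ss_sub sB BD.
have Dh x : D x <-> (2^-1 < h x)%R by rewrite /D /= in_itv /= andbT.
have hint (C : set T) : measurable C -> \int[P]_(x in C) (h x)%:E \is a fin_num.
  move=> mC; apply: integrable_fin_num => //.
  by apply: (integrableS measurableT) => //; exact: hM_int.
have cpos (C : set T) : measurable C -> P C != 0 -> (0 < fine (P C))%R.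
  move=> mC PC; apply: fine_gt0; rewrite lt0e PC measure_ge0/=.
  by rewrite ltey_eq fin_num_measure.
case: (eqVneq (P (S `\` D)) 0) => [PSD|PSD].
  case: (eqVneq (P (D `\` S)) 0) => [PDS|PDS].
    by exfalso; apply: nBS; exact: (ss_complete sB mS BD PSD PDS).
  have mC : measurable (D `\` S) by exact: measurableD.
  have c0 := cpos _ mC PDS.
  apply: (L1_step sA mS AS c0).
  rewrite (swap_hh sB mS mC) -/h.
  have -> : (D `\` S) `&` S = set0 by apply/seteqP; split => x // [[_ ?] ?].
  rewrite measure0 /=.
  apply: lemR2 => //.
  rewrite -lee_fin fineK ?hint//.
  apply: le_trans (_ : \int[P]_(x in D `\` S) (2^-1)%:E <= _).
    by rewrite integral_cst// halfE ?fin_num_measure//; exact: lexx.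
  apply: ge0_le_integral => //.
  - by apply/measurable_EFinP; exact: measurable_funTS (measurable_hM _ _ _ _).
  - by move=> x [/Dh/ltW]; rewrite lee_fin.
have mC : measurable (S `\` D) by exact: measurableD.
have c0 := cpos _ mC PSD.
apply: (L1_step sA mS AS c0).
rewrite (swap_hh sB mS mC) -/h.
have -> : (S `\` D) `&` S = S `\` D by apply/seteqP; split => x //; [case|move=> [? ?]; split].
apply: lemR1 => //.
  by rewrite fine_ge0// integral_ge0// => x _; rewrite lee_fin hM_ge0.
rewrite -lee_fin fineK ?hint//.
apply: (@le_trans _ _ (\int[P]_(x in S `\` D) (2^-1)%:E)).
  apply: ge0_le_integral => //.
  - by move=> x _; rewrite lee_fin hM_ge0.
  - by apply/measurable_EFinP; exact: measurable_funTS (measurable_hM _ _ _ _).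
  - by move=> x [_ /Dh/negP]; rewrite -leNgt lee_fin.
by rewrite integral_cst// halfE ?fin_num_measure//; exact: lexx.
Qed.

End L1.

Section Linf.
Context d (T : measurableType d) (R : realType) (P : probability T R).

Lemma ce_self X (sX : sigma_subfield P X) M (XM : X M) (k : R) :
  is_cond_exp P X (fun x => k * \1_M x)%R (fun x => k * \1_M x)%R.
Proof.
have mM : measurable M := ss_sub sX XM.
split => //.
- move=> U mU; apply: (measT'B (ss_sa sX)).
  have mf : measurable_fun (setT : set (g_sigma_algebraType X))
     (fun x : g_sigma_algebraType X => k * \1_M x)%R.
    by apply: measurable_funM => //; apply: measurable_indic; exact: BT'.
  by have := mf measurableT _ mU; rewrite setTI.
- have -> : EFin \o (fun x => k * \1_M x)%R = (fun x => k%:E * (EFin \o \1_M) x).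
    by apply/funext => x; rewrite /= EFinM.
  by apply: integrableZl => //; exact: integrable_indic.
Qed.

Lemma LinfE (g : T -> \bar R) : Lnorm P +oo g = ess_sup P (abse \o g).
Proof. by rewrite unlock /= probability_setT lte_fin ltr01. Qed.

Lemma Linf_bound A B (sA : sigma_subfield P A) (sB : sigma_subfield P B) S :
  A S -> ~ B S -> (1/2)%:E <= condexp_diff_opnorm P +oo A B.
Proof.
move=> AS nBS.
have mS : measurable S := ss_sub sA AS.
set h := hh sB mS.
pose D := h @^-1` [set` `]2^-1%R, +oo[%R].
have BD : B D by apply: hM_wrt; exact: measurable_itv.
have mD : measurable D := ss_sub sB BD.
have Dh x : D x <-> (2^-1 < h x)%R by rewrite /D /= in_itv /= andbT.
pose f (x : T) : R := (1 * \1_S x)%R.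
pose gB x := (1 * h x)%R.
rewrite /condexp_diff_opnorm; apply: ereal_sup_ge.
exists (Lnorm P +oo (fun x => (f x - gB x)%:E)).
  exists f, f, gB.
  have fle1 : Lnorm P +oo (EFin \o f) <= 1.
    rewrite LinfE; apply/ess_supP; apply: aeW => x /=.
    by rewrite /f mul1r lee_fin indicE; case: (x \in S); rewrite ?normr1 ?normr0.
  split => //.
  - split; last exact: le_lt_trans fle1 (ltry _).
    by apply: measurable_funM => //; exact: measurable_indic.
  - exact: ce_self.
  - exact: ce_hM.
rewrite LinfE leNgt; apply/negP => hv.
have [N [mN PN0 sub]] := ess_sup_ge P (abse \o (fun x => (f x - gB x)%:E)).
have key x : (2^-1 <= `|f x - gB x|)%R -> N x.
  move=> hx; apply: sub => /= hle.
  have := le_lt_trans hle hv; rewrite lte_fin div1r.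
  by rewrite ltNge hx.
have PSD : P (S `\` D) = 0.
  apply: (subset_measure0 _ mN _ PN0); first exact: measurableD.
  move=> x [Sx /Dh /negP]; rewrite -leNgt => hx; apply: key.
  rewrite /f /gB !mul1r indicE mem_set//.
  apply: le_trans (ler_norm _); rewrite (_ : true%:R = 1)%R //; lra.
have PDS : P (D `\` S) = 0.
  apply: (subset_measure0 _ mN _ PN0); first exact: measurableD.
  move=> x [/Dh hx nSx]; apply: key.
  rewrite /f /gB !mul1r indicE memNset// sub0r normrN.
  by apply: le_trans (ler_norm _); exact: ltW.
exact: nBS (ss_complete sB mS BD PSD PDS).
Qed.
End Linf.

Lemma Lnorm_swap d (T : measurableType d) (R : realType) (P : probability T R) p (g1 g2 : T -> R) :
  Lnorm P p (fun x => (g1 x - g2 x)%:E) = Lnorm P p (fun x => (g2 x - g1 x)%:E).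
Proof.
rewrite -Lnorm_abse -[RHS]Lnorm_abse; congr Lnorm; apply/funext => x /=.
by rewrite distrC.
Qed.

Lemma opnorm_sym d (T : measurableType d) (R : realType) (P : probability T R) p A B :
  condexp_diff_opnorm P p A B = condexp_diff_opnorm P p B A.
Proof.
rewrite /condexp_diff_opnorm; congr ereal_sup; apply/seteqP; split => v
  [f [gA [gB [h1 h2 h3 h4 ->]]]]; exists f, gB, gA; split => //; exact: Lnorm_swap.
Qed.

Unset Implicit Arguments. Set Strict Implicit. Set Printing Implicit Defensive.

Theorem mainTheorem12 (d : measure_display) (T : measurableType d)
  (R : realType) (P : probability T R) :
  (forall A B : set (set T), sigma_subfield P A -> sigma_subfield P B -> A <> B ->
     1 <= condexp_diff_opnorm P 1 A B /\
     (1 / 2)%:E <= condexp_diff_opnorm P +oo A B) /\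
  (forall Bs : nat -> set (set T), (forall n, sigma_subfield P (Bs n)) ->
     ((fun n => condexp_diff_opnorm P 1 (Bs n) (Bs 0%N)) @ \oo --> 0 \/
      (fun n => condexp_diff_opnorm P +oo (Bs n) (Bs 0%N)) @ \oo --> 0) ->
     \forall n \near \oo, Bs n = Bs 0%N).
Proof.
have part1 : forall A B : set (set T), sigma_subfield P A -> sigma_subfield P B -> A <> B ->
     1 <= condexp_diff_opnorm P 1 A B /\
     (1 / 2)%:E <= condexp_diff_opnorm P +oo A B.
  move=> A B sA sB AB.
  have [S hS] : exists S, ~ (A S <-> B S).
    apply/not_existsP => hall; apply: AB; apply/seteqP; split => S.
      by have := hall S => /contrapT [].
    by have := hall S => /contrapT [].
  have [[AS nBS]|[BS nAS]] : (A S /\ ~ B S) \/ (B S /\ ~ A S).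
    by case: (pselect (A S)); case: (pselect (B S)); tauto.
    by split; [exact: (L1_bound sA sB AS nBS)|exact: (Linf_bound sA sB AS nBS)].
  by split; rewrite opnorm_sym; [exact: (L1_bound sB sA BS nAS)|exact: (Linf_bound sB sA BS nAS)].
split => // Bs sBs [hc|hc].
  have H1 : \forall n \near \oo, condexp_diff_opnorm P 1 (Bs n) (Bs 0%N) < 1.
    exact: (hc (fun u : \bar R => u < 1) (open_ereal_lt' (lte01 : (0 : \bar R) < 1))).
  near=> n.
  case: (pselect (Bs n = Bs 0%N)) => // ne.
  have hn : condexp_diff_opnorm P 1 (Bs n) (Bs 0%N) < 1 by near: n; exact: H1.
  by have [+ _] := part1 _ _ (sBs n) (sBs 0%N) ne; rewrite leNgt hn.
have h2 : (0 : \bar R) < (1 / 2)%:E by rewrite lte_fin divr_gt0.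
have H1 : \forall n \near \oo, condexp_diff_opnorm P +oo (Bs n) (Bs 0%N) < (1/2)%:E.
  exact: (hc (fun u : \bar R => u < (1/2)%:E) (open_ereal_lt' h2)).
near=> n.
case: (pselect (Bs n = Bs 0%N)) => // ne.
have hn : condexp_diff_opnorm P +oo (Bs n) (Bs 0%N) < (1/2)%:E by near: n; exact: H1.
by have [_ +] := part1 _ _ (sBs n) (sBs 0%N) ne; rewrite leNgt hn.
Unshelve. all: by end_near.
Qed.
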